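(* Let $n\ge1$, let $H\subseteq Q_n$ be any set of more than $2^{n-1}$ vertices, and let $C>0$. Then there exists $\beta\in H$ (depending on $C$) such that \[ \sqrt{n}\ \le\ C\cdot\#\{\gamma\in H:\gamma\to\beta\}+\frac{1}{C}\cdot\#\{\gamma\in H:\beta\to\gamma\}. \]
   Context: $Q_n=\{0,1\}^n$ is the boolean cube, viewed as a graph in which two vertices are adjacent iff they differ in exactly one coordinate. For $\gamma,\beta\in Q_n$ write $\gamma\to\beta$ if $\gamma$ and $\beta$ differ in exactly one coordinate $k$ and $\gamma_k=0$, $\beta_k=1$ (i.e. $\beta$ is obtained from $\gamma$ by changing a single $0$ to $1$). *)

(* Defs.v *)
From HB Require Import structures.
From mathcomp Require Import all_boot all_order all_algebra.
Set Implicit Arguments. Unset Strict Implicit. Unset Printing Implicit Defensive.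

(* The boolean cube Q_n = {0,1}^n, vertices as finite functions 'I_n -> bool
   (false = 0, true = 1). *)
Definition cube (n : nat) := {ffun 'I_n -> bool}.

(* up g b  <=>  g -> b : g and b differ in exactly one coordinate k,
   with g k = 0 and b k = 1. *)
Definition up (n : nat) (g b : cube n) : bool :=
  [exists k : 'I_n, [&& ~~ g k, b k & [forall j : 'I_n, (j != k) ==> (g j == b j)]]].

(* Main.v *)
Require Import Defs.
From HB Require Import structures.
From mathcomp Require Import all_boot all_order all_algebra.
From mathcomp Require Import zify ring.
Import Order.TTheory GRing.Theory Num.Theory.
Local Open Scope ring_scope.
Set Implicit Arguments. Unset Strict Implicit. Unset Printing Implicit Defensive.

Fixpoint sz (n : nat) : nat := if n is n'.+1 then (sz n' + sz n')%N else 1%N.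

Lemma szE n : sz n = (2 ^ n)%N.
Proof. by elim: n => //= n ->; rewrite expnS mul2n addnn. Qed.

Definition ext n (g : cube n) (c : bool) : cube n.+1 :=
  [ffun k => if unlift ord_max k is Some k' then g k' else c].

Lemma ext_max n (g : cube n) c : ext g c ord_max = c.
Proof. by rewrite ffunE unlift_none. Qed.

Lemma ext_lift n (g : cube n) c k : ext g c (lift ord_max k) = g k.
Proof. by rewrite ffunE liftK. Qed.

Lemma ext_inj n (g h : cube n) c d : ext g c = ext h d -> g = h /\ c = d.
Proof.
move=> e; split; last by rewrite -(ext_max g c) -(ext_max h d) e.
by apply/ffunP => k; rewrite -(ext_lift g c) -(ext_lift h d) e.
Qed.

Lemma upP n (g b : cube n) :
  reflect (exists k, [/\ ~~ g k, b k & forall j, j != k -> g j = b j]) (up g b).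
Proof.
apply: (iffP existsP) => [[k /and3P[gk bk /forallP E]]|[k [gk bk E]]].
  by exists k; split=> // j jk; apply/eqP; move/implyP: (E j); apply.
by exists k; rewrite gk bk /=; apply/forallP => j; apply/implyP => /E ->.
Qed.

Lemma up0 (g b : cube 0) : up g b = false.
Proof. by apply/upP => -[[]]. Qed.

Lemma up_same n (g h : cube n) c : up (ext g c) (ext h c) = up g h.
Proof.
apply/upP/upP => [[k [gk hk E]]|[k [gk hk E]]].
  case: (unliftP ord_max k) => [k'|] ek; subst k.
    rewrite !ext_lift in gk hk; exists k'; split=> // j jk.
    by have := E (lift ord_max j); rewrite !ext_lift; apply; rewrite (inj_eq lift_inj).
  by rewrite !ext_max in gk hk; rewrite hk in gk.
exists (lift ord_max k); rewrite !ext_lift; split=> // j.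
case: (unliftP ord_max j) => [j'|] ->; rewrite ?ext_lift ?ext_max //.
by rewrite (inj_eq lift_inj) => /E.
Qed.

Lemma up_FT n (g h : cube n) : up (ext g false) (ext h true) = (g == h).
Proof.
apply/upP/eqP => [[k [gk hk E]]|->].
  case: (unliftP ord_max k) => [k'|] ek; subst k.
    suff: false = true by [].
    by rewrite -{1}(ext_max g false) -(ext_max h true); apply: E; apply: neq_lift.
  apply/ffunP => j; have := E (lift ord_max j); rewrite !ext_lift; apply.
  by rewrite eq_sym neq_lift.
exists ord_max; rewrite !ext_max; split=> // j.
by case: (unliftP ord_max j) => [j'|] ->; rewrite ?eqxx // !ext_lift.
Qed.

Lemma up_TF n (g h : cube n) : up (ext g true) (ext h false) = false.
Proof.
apply/upP => -[k [gk hk E]].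
case: (unliftP ord_max k) => [k'|] ek; subst k; last by rewrite ext_max in gk.
suff: true = false by [].
by rewrite -{1}(ext_max g true) -(ext_max h false); apply: E; apply: neq_lift.
Qed.

Fixpoint phi n : 'I_(sz n) -> cube n :=
  match n return 'I_(sz n) -> cube n with
  | 0 => fun _ => [ffun _ => false]
  | n'.+1 => fun i => match @split (sz n') (sz n') i with
                      | inl j => ext (phi j) false
                      | inr j => ext (phi j) true end
  end.

Lemma phiL n (i : 'I_(sz n)) : phi (lshift (sz n) i : 'I_(sz n.+1)) = ext (phi i) false.
Proof. by rewrite /= (unsplitK (inl _ i)). Qed.

Lemma phiR n (i : 'I_(sz n)) : phi (rshift (sz n) i : 'I_(sz n.+1)) = ext (phi i) true.
Proof. by rewrite /= (unsplitK (inr _ i)). Qed.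

Lemma phiUL n (i : 'I_(sz n)) : phi (unsplit (inl i : 'I_(sz n) + 'I_(sz n)) : 'I_(sz n.+1)) = ext (phi i) false.
Proof. exact: phiL. Qed.
Lemma phiUR n (i : 'I_(sz n)) : phi (unsplit (inr i : 'I_(sz n) + 'I_(sz n)) : 'I_(sz n.+1)) = ext (phi i) true.
Proof. exact: phiR. Qed.

Lemma phi_inj n : injective (@phi n).
Proof.
elim: n => [|n IH] i j; first by rewrite (ord1 i) (ord1 j).
rewrite -[i](splitK) -[j](splitK).
case: (split i) => i'; case: (split j) => j';
  rewrite ?phiUL ?phiUR => /ext_inj [e1 e2] //; by rewrite (IH _ _ e1).
Qed.

Lemma phi_bij n : bijective (@phi n).
Proof.
apply: inj_card_bij; first exact: phi_inj.
rewrite card_ord szE. have := card_ffun ('I_n) bool. rewrite card_bool card_ord. by move=> <-.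
Qed.
Section Mat.
Variable R : rcfType.
Variable C : R.
Hypothesis C0 : 0 < C.

Fixpoint Bm n : 'M[R]_(sz n) :=
  match n return 'M[R]_(sz n) with
  | 0 => 0
  | n'.+1 => block_mx (Bm n') C%:M (C^-1)%:M (- Bm n')
  end.

Lemma BmS n : Bm n.+1 = block_mx (Bm n) C%:M (C^-1)%:M (- Bm n).
Proof. by []. Qed.

Lemma Bm_sq n : Bm n *m Bm n = (n%:R)%:M.
Proof.
have Cn0 : C != 0 by rewrite gt_eqF.
elim: n => [|n IH]; first by rewrite /= mul0mx; apply/matrixP => i j; rewrite !mxE mul0rn.
rewrite BmS mulmx_block IH (scalar_mx_block (sz n) (sz n)); congr block_mx.
- by rewrite mul_scalar_mx scale_scalar_mx divff // -raddfD /= -natr1.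
- by rewrite mul_mx_scalar mul_scalar_mx scalerN addrN.
- by rewrite mul_mx_scalar mul_scalar_mx scalerN addrN.
- by rewrite mul_scalar_mx scale_scalar_mx mulVf // mulNmx mulmxN opprK IH -raddfD /= addrC natr1.
Qed.

Lemma Bm_abs n (i j : 'I_(sz n)) :
  `|Bm n i j| = (up (phi i) (phi j))%:R * C + (up (phi j) (phi i))%:R * C^-1.
Proof.
elim: n i j => [|n IH] i j; first by rewrite /= !up0 mxE normr0 !mul0r addr0.
rewrite -[i](splitK) -[j](splitK).
case: (split i) => i'; case: (split j) => j'; rewrite ?phiUL ?phiUR BmS.
- by rewrite [unsplit _]/= [unsplit (inl j')]/= block_mxEul !up_same IH.
- rewrite [unsplit _]/= [unsplit (inr j')]/= block_mxEur up_FT up_TF (inj_eq (@phi_inj _)) mxE.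
  by case: (i' == j'); rewrite /= ?mulr0n ?normr0 ?mul0r ?mul1r ?addr0 ?mulr1n ?gtr0_norm.
- rewrite [unsplit _]/= [unsplit (inl j')]/= block_mxEdl up_FT up_TF (inj_eq (@phi_inj _)) mxE eq_sym.
  by case: (j' == i'); rewrite /= ?mulr0n ?normr0 ?mul0r ?mul1r ?add0r ?mulr1n ?gtr0_norm ?invr_gt0.
- by rewrite [unsplit _]/= [unsplit (inr j')]/= block_mxEdr !up_same mxE normrN IH.
Qed.

Lemma sum_ind (T : finType) (S : {set T}) (x : R) :
  \sum_(g : T) (g \in S)%:R * x = x * #|S|%:R.
Proof.
rewrite -mulr_suml mulrC; congr (_ * _).
rewrite -sumr_const [in RHS]big_mkcond /=; apply: eq_bigr => g _; by case: (g \in S).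
Qed.

Lemma key n (H : {set cube n}) (e : R) :
  (#|[pred i | phi i \notin H]| < \rank (kermx (Bm n + e%:M)))%N ->
  exists2 b : cube n, b \in H &
   `|e| <= C * (#|[set g in H | up g b]|)%:R + C^-1 * (#|[set g in H | up b g]|)%:R.
Proof.
set A := [pred i | phi i \notin H]; set K := #|A|.
set Y := kermx (Bm n + e%:M).
pose E : 'M[R]_(sz n, K) := \matrix_(i, k) (i == enum_val k)%:R.
move=> hK.
have hr := mxrank_mul_ker Y E.
have hle := rank_leq_col (Y *m E).
have : (Y :&: kermx E)%MS != 0.
  by rewrite -mxrank_eq0; apply/eqP => h0; rewrite h0 addn0 in hr; lia.
case/rowV0Pn => v vYE v0.
have vY : (v <= Y)%MS := submx_trans vYE (capmxSl _ _).
have vE : (v <= kermx E)%MS := submx_trans vYE (capmxSr _ _).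
have hvB : v *m Bm n = - e *: v.
  move/sub_kermxP: vY; rewrite mulmxDr mul_mx_scalar => /eqP; rewrite addr_eq0 => /eqP ->.
  by rewrite scaleNr.
have vH : forall i, phi i \notin H -> v 0 i = 0.
  move=> i Ai. have Ai' : i \in A by [].
  move/sub_kermxP: vE => /matrixP/(_ 0 (enum_rank_in Ai' i)).
  rewrite !mxE (bigD1 i) //= mxE enum_rankK_in // eqxx mulr1 big1 ?addr0 // => j ji.
  by rewrite mxE enum_rankK_in // (negbTE ji) mulr0.
have [i0 vi0] : exists i0, v 0 i0 != 0.
  case: (pickP (fun i => v 0 i != 0)) => [i0 h|h]; first by exists i0.
  exfalso; move/negP: v0; apply; apply/eqP/matrixP => a i; rewrite (ord1 a) mxE.
  by move/negbFE/eqP: (h i).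
case: (@arg_maxP _ _ _ i0 xpredT (fun j => `|v 0 j|) isT) => bt _ hbt.
have vb0 : v 0 bt != 0.
  by rewrite -normr_gt0 (lt_le_trans _ (hbt i0 isT)) // normr_gt0.
have bH : phi bt \in H by apply/negPn/negP => /vH h; rewrite h eqxx in vb0.
exists (phi bt) => //.
have hpos : 0 < `|v 0 bt| by rewrite normr_gt0.
rewrite -(ler_pM2r hpos).
have -> : `|e| * `|v 0 bt| = `|(v *m Bm n) 0 bt| by rewrite hvB mxE normrM normrN.
rewrite mxE.
apply: le_trans (ler_norm_sum _ _ _) _.
apply: le_trans (_ : \sum_j `|v 0 bt| * ((phi j \in H)%:R * `|Bm n j bt|) <= _).
  apply: ler_sum => j _; rewrite normrM; case: (boolP (phi j \in H)) => hj.
    by rewrite mul1r ler_wpM2r //; apply: hbt.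
  by rewrite (vH _ hj) normr0 !mul0r mulr0.
rewrite -mulr_sumr mulrC; apply: ler_wpM2r; first exact: ltW.
set b := phi bt.
rewrite -(sum_ind [set g in H | up g b] C) -(sum_ind [set g in H | up b g] C^-1) -big_split /=.
rewrite (reindex (@phi n)) /=; last exact: onW_bij (phi_bij n).
rewrite le_eqVlt; apply/orP; left; apply/eqP; apply: eq_bigr => j _; rewrite Bm_abs !inE.
by case: (phi j \in H); case: (up (phi j) b); case: (up b (phi j)); rewrite /= ?mul0r ?mul1r ?add0r ?addr0 ?mulr0.
Qed.
End Mat.


Theorem mainTheorem4 (R : rcfType) (n : nat) (H : {set cube n}) (C : R) :
  (1 <= n)%N -> (2 ^ n.-1 < #|H|)%N -> 0 < C ->
  exists2 b : cube n, b \in H &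
    Num.sqrt (n%:R : R) <=
      C * (#|[set g in H | up g b]|)%:R + C^-1 * (#|[set g in H | up b g]|)%:R.
Proof.
move=> n1 hH C0.
set s := Num.sqrt (n%:R : R).
have s2 : s ^+ 2 = n%:R by rewrite sqr_sqrtr // ler0n.
have s0 : 0 <= s := sqrtr_ge0 _.
set P := Bm C n + s%:M; set Q := Bm C n + (- s)%:M.
have QP : Q *m P = 0.
  rewrite /P /Q mulmxDl !mulmxDr (Bm_sq C0) (mul_mx_scalar s (Bm C n)) (mul_scalar_mx (- s) (Bm C n)) (mul_scalar_mx (- s) s%:M) scale_scalar_mx.
  rewrite scaleNr mulNr -expr2 s2.
  apply/matrixP => i j; rewrite !mxE.
  by case: (i == j); rewrite ?mulr1n ?mulr0n; ring.
have rPQ : (\rank Q <= sz n - \rank P)%N.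
  by rewrite -mxrank_ker; apply: mxrankS; apply/sub_kermxP.
have hsz : sz n = (2 ^ n)%N := szE n.
have e2 : (2 ^ n = 2 * 2 ^ n.-1)%N by rewrite -expnS prednK.
have h1 : #|[pred i | phi i \in H]| = #|H|.
  by rewrite -(on_card_preimset (onW_bij _ (phi_bij n))); apply: eq_card => i; rewrite !inE.
have hK : (#|[pred i | phi i \notin H]| + #|H| = sz n)%N.
  rewrite -h1 addnC -[in RHS](card_ord (sz n)) -(cardC [pred i | phi i \in H]); congr (_ + _).
have rP := rank_leq_col P.
case: (leqP (\rank P) (\rank Q)) => hPQ.
  have hk : (#|[pred i | phi i \notin H]| < \rank (kermx P))%N.
    move=> {QP}; rewrite mxrank_ker; lia.
  have [b bH hb] := key C0 hk.
  by exists b => //; rewrite -(ger0_norm s0).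
have hk : (#|[pred i | phi i \notin H]| < \rank (kermx Q))%N.
  by move=> {QP}; rewrite mxrank_ker; have rQ := rank_leq_col Q; lia.
have [b bH hb] := key C0 hk.
by exists b => //; rewrite -(ger0_norm s0) -normrN.
Qed.
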